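(* Consider Setting B with the regular nodes running Algorithm 2 (any graph sequence, any adversarial behavior). Let $i\in(\mathcal V\setminus\mathcal S)\cap\mathcal R$ and $k\in\mathbb N_+$ with $\tau_i[k]\neq\omega$. Then, componentwise (slot by slot), $$\mathbf d_i[k+1]\le \mathbf d_i[k]+\mathbf 1_{2f+1},\qquad\text{and}\qquad \tau_i[k+1]\le\tau_i[k]+1,$$ where $\mathbf d_i[k]\in\mathbb N^{2f+1}$ is the vector of stored indices $d_{i,l}$, $l\in\mathcal M_i$, arranged by storage slot, at time $k$ after the append operations of step $k$ and before the increment at the end of step $k$ (so that (F) sets $\tau_i[k+1]=\max_p(\mathbf d_i[k])_p+1$).
   Context: Setting B. Scalar system $x[k+1]=ax[k]$, $a\in\mathbb R$, monitored by nodes $\mathcal V=\{1,\dots,N\}$ with measurements $y_i[k]=c_ix[k]$, $c_i\in\mathbb R$. Source set $\mathcal S=\{i\in\mathcal V:c_i\neq0\}$. Time-varying directed graphs $\mathcal G[k]=(\mathcal V,\mathcal E[k])$, $\mathcal N_i[k]=\{l\ne i:(l,i)\in\mathcal E[k]\}$; the union graph over an interval has the union of the edge sets. An unknown set $\mathcal A\subseteq\mathcal V$ of adversarial nodes with $|\mathcal A|\le f$ ($f$-total model; $\mathcal A$ may intersect $\mathcal S$); $\mathcal R=\mathcal V\setminus\mathcal A$ are regular. Adversaries are Byzantine: at each time they may send arbitrary, possibly different values (of both estimate and freshness index) to different out-neighbors, or send nothing, and may collude. At each time $k$, each node $l$ sends to its out-neighbors a pair (estimate, freshness index); regular $l$ sends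 its true $(\hat x_l[k],\tau_l[k])$. Algorithm 2 (executed by regular nodes). Regular source $i\in\mathcal S$: $\tau_i[k]=0$ for all $k$ and $\hat x_i[k+1]=a\hat x_i[k]+l_i(y_i[k]-c_i\hat x_i[k])$ with observer gain $l_i$. Regular non-source $i$: keeps $\hat x_i[k]$ (arbitrary initial), $\tau_i[k]\in\mathbb N\cup\{\omega\}$ with $\tau_i[0]=\omega$, and a list $\mathcal M_i$ of distinct node labels (initially empty, at most $2f+1$ entries, stored in $2f+1$ slots) with, for each $l\in\mathcal M_i$, a stored estimate $v_{i,l}$, stored index $d_{i,l}\in\mathbb N$ and time stamp $\phi_{i,l}$. At time $k$ let $\mathcal J_i[k]$ be the set of $l\in\mathcal N_i[k]$ whose reported index $\tau_l[k]$ lies in $\mathbb N$ and satisfies $\tau_l[k]\le k$. ''Appending $l$ at time $k$'' means: put $l$ in $\mathcal M_i$ (if absent), set $v_{i,l}=\hat x_l[k]$, $d_{i,l}=\tau_l[k]$ (reported values), $\phi_{i,l}=k$. Filtering update (F) at time $k$ (requires $|\mathcal M_i|=2f+1$): set $\tau_i[k+1]=\max_{l\in\mathcal M_i}d_{i,l}+1$; form $\bar x_{i,l}[k]=a^{k-\phi_{i,l}}v_{i,l}$ for $l\in\mathcal M_i$; discard the $f$ largest and $f$ smallest of these $2f+1$ values, call the remaining one $\bar x_i[k]$, and set $\hat x_i[k+1]=a\bar x_i[k]$. Case $\tau_i[k]=\omega$: let $\mathcal J'=\mathcal J_i[k]\setminus\mathcal M_i$. If $|\mathcal M_i|+|\mathcal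 J'|<2f+1$, append every $l\in\mathcal J'$, set $\tau_i[k+1]=\omega$ and $\hat x_i[k+1]=a\hat x_i[k]$. Otherwise append the $2f+1-|\mathcal M_i|$ nodes of $\mathcal J'$ with smallest reported indices (ties broken arbitrarily) and perform (F). Case $\tau_i[k]\ne\omega$: for each $l\in\mathcal J_i[k]\cap\mathcal M_i$ with reported $\tau_l[k]<d_{i,l}$, append $l$ (refreshing its entries); then rank the nodes of $\mathcal M_i\cup(\mathcal J_i[k]\setminus\mathcal M_i)$ by index ($d_{i,l}$ for $l\in\mathcal M_i$, reported $\tau_l[k]$ otherwise), keep the $2f+1$ with smallest index (ties arbitrary), appending newcomers and deleting dropped nodes (a retained node keeps its storage slot; a newcomer occupies the slot of a dropped node), and perform (F). In all cases, after the step every stored $d_{i,l}$ is incremented by $1$, and $\mathcal M_i$, $v$, $\phi$ carry over to time $k+1$. *)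

(* Defs.v *)
From HB Require Import structures.
From mathcomp Require Import all_boot all_order all_algebra.
Set Implicit Arguments. Unset Strict Implicit. Unset Printing Implicit Defensive.
Import Order.TTheory GRing.Theory Num.Theory.
Local Open Scope ring_scope.

(* A stored record in a storage slot: label l, estimate v_{i,l},
   index d_{i,l}, time stamp phi_{i,l}. *)
Record entry (N : nat) (R : Type) := Entry {
  lab : 'I_N; val : R; idx : nat; stamp : nat }.

(* The 2f+1 storage slots of a non-source node; None = empty slot. *)
Definition slots (N m : nat) (R : Type) := 'I_m -> option (entry N R).

Section Alg.
Variables (R : realFieldType) (N f : nat).
Local Notation m := (2 * f).+1.
Local Notation slotsT := (slots N m R).

Definition slot_has (s : slotsT) (p : 'I_m) (l : 'I_N) : bool :=
  if s p is Some e then lab e == l else false.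

Definition Mset (s : slotsT) : {set 'I_N} := [set l | [exists p, slot_has s p l]].

Definition distinct_labels (s : slotsT) : Prop :=
  forall p q e e', s p = Some e -> s q = Some e' -> lab e = lab e' -> p = q.

Definition full (s : slotsT) : Prop := forall p, s p <> None.

Definition slot_idx (s : slotsT) (p : 'I_m) : nat :=
  if s p is Some e then idx e else 0%N.

Definition incr (s : slotsT) : slotsT :=
  fun p => if s p is Some e then Some (Entry (lab e) (val e) (idx e).+1 (stamp e))
           else None.

Definition filter_update (a : R) (k : nat) (s : slotsT)
    (tau' : option nat) (xh' : R) : Prop :=
  full s /\
  tau' = Some ((\max_(p < m) slot_idx s p) + 1)%N /\
  let vals := [seq (if s p is Some e then a ^+ (k - stamp e) * val e else 0)
              | p <- enum 'I_m] in
  xh' = a * nth 0 (sort <=%R vals) f.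

(* Appending the nodes of [S] (none of which is in M_i) into empty slots,
   all other slots unchanged.  [fresh l] is the entry built from reported values. *)
Definition append_into_empty (fresh : 'I_N -> entry N R) (S : {set 'I_N})
    (s mid : slotsT) : Prop :=
  (forall p e, s p = Some e -> mid p = Some e) /\
  (forall p e, mid p = Some e ->
      s p = Some e \/ (s p = None /\ lab e \in S /\ e = fresh (lab e))) /\
  (forall l, l \in S -> exists p, mid p = Some (fresh l)) /\
  distinct_labels mid.

Definition refresh (Jset : {set 'I_N}) (rt : 'I_N -> nat)
    (fresh : 'I_N -> entry N R) (s : slotsT) : slotsT :=
  fun p => if s p is Some e then
             if (lab e \in Jset) && (rt (lab e) < idx e)%N then Some (fresh (lab e))
             else Some e
           else None.

Definition rank_idx (s : slotsT) (rt : 'I_N -> nat) (l : 'I_N) : nat :=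
  if [pick p | slot_has s p l] is Some p then slot_idx s p else rt l.

(* Outputs: [mid] = slots after the
   append/delete operations of step k (before the increment), and the
   next tau, xhat. *)
Definition nonsource_step (a : R) (k : nat) (Jset : {set 'I_N})
    (rv : 'I_N -> R) (rt : 'I_N -> nat)
    (tau : option nat) (xh : R) (s : slotsT)
    (mid : slotsT) (tau' : option nat) (xh' : R) : Prop :=
  let fresh l := Entry l (rv l) (rt l) k in
  let J' := Jset :\: Mset s in
  match tau with
  | None =>
    if (#|Mset s| + #|J'| < m)%N then
      append_into_empty fresh J' s mid /\ tau' = None /\ xh' = a * xh
    else
      exists S : {set 'I_N},
        [/\ S \subset J', #|S| = (m - #|Mset s|)%N,
            (forall l l', l \in S -> l' \in J' :\: S -> (rt l <= rt l')%N),
            append_into_empty fresh S s mid &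
            filter_update a k mid tau' xh']
  | Some _ =>
    let s' := refresh Jset rt fresh s in
    let Cand := Mset s :|: J' in
    exists K : {set 'I_N},
      K \subset Cand /\ #|K| = m /\
      (forall l l', l \in K -> l' \in Cand :\: K ->
          (rank_idx s' rt l <= rank_idx s' rt l')%N) /\
      (forall p e, s' p = Some e -> lab e \in K -> mid p = Some e) /\
      (forall p e, mid p = Some e ->
          (s' p = Some e /\ lab e \in K) \/
          (lab e \in K :\: Mset s /\ e = fresh (lab e))) /\
      (forall l, l \in K :\: Mset s -> exists p, mid p = Some (fresh l)) /\
      distinct_labels mid /\
      filter_update a k mid tau' xh'
  end.

End Alg.

(* Messages: what node l sends to node i at time k:
   None = nothing sent; Some (estimate, index) with index None = omega. *)
Definition msg_t (R : Type) := option (R * option nat)%type.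

Definition reported_idx (R : Type) (ms : msg_t R) : nat :=
  if ms is Some (_, Some t) then t else 0%N.
Definition reported_est (R : ringType) (ms : msg_t R) : R :=
  if ms is Some (v, _) then v else 0.

Definition Jset (R : Type) (N : nat) (E : nat -> rel 'I_N)
    (msg : nat -> 'I_N -> 'I_N -> msg_t R) (k : nat) (i : 'I_N) : {set 'I_N} :=
  [set l | [&& l != i, E k l i &
             (if msg k l i is Some (_, Some t) then (t <= k)%N else false)]].

(* An execution of Setting B with the regular nodes running Algorithm 2.
   x: true state; msg: messages; tau, xh: freshness indices and estimates
   of the nodes; sl k i: slots of node i at (the start of) time k;
   mid k i: slots of node i at time k after the append operations of step k
   and before the increment. Adversarial nodes (in A) are unconstrained. *)
Definition execution (R : realFieldType) (N f : nat) (A : {set 'I_N})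
    (a : R) (c gain : 'I_N -> R) (E : nat -> rel 'I_N)
    (x : nat -> R) (msg : nat -> 'I_N -> 'I_N -> msg_t R)
    (tau : nat -> 'I_N -> option nat) (xh : nat -> 'I_N -> R)
    (sl mid : nat -> 'I_N -> slots N (2 * f).+1 R) : Prop :=
  [/\ (#|A| <= f)%N,
      (forall k, x k.+1 = a * x k),
      (forall k l i, l \notin A -> msg k l i = Some (xh k l, tau k l)),
      (forall i, i \notin A -> c i != 0 ->
         forall k, tau k i = Some 0%N /\
                   xh k.+1 i = a * xh k i + gain i * (c i * x k - c i * xh k i)) &
      (forall i, i \notin A -> c i = 0 ->
         [/\ tau 0%N i = None, (forall p, sl 0%N i p = None) &
             forall k,
               nonsource_step a k (Jset E msg k i)
                 (fun l => reported_est (msg k l i)) (fun l => reported_idx (msg k l i))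
                 (tau k i) (xh k i) (sl k i) (mid k i) (tau k.+1 i) (xh k.+1 i) /\
               sl k.+1 i = incr (mid k i)])].

(* Main.v *)
Require Import Defs.
From HB Require Import structures.
From mathcomp Require Import all_boot all_order all_algebra.
Set Implicit Arguments. Unset Strict Implicit. Unset Printing Implicit Defensive.

Section H.
Variables (R : realFieldType) (N f : nat).
Local Notation m := (2 * f).+1.
Local Notation slotsT := (slots N m R).

Lemma step_some (a : R) k J rv rt tau xh (s mid : slotsT) t' xh' :
  nonsource_step a k J rv rt tau xh s mid (Some t') xh' ->
  [/\ full mid, distinct_labels mid & t' = ((\max_(p < m) slot_idx mid p) + 1)%N].
Proof.
rewrite /nonsource_step; case: tau => [t|].
  move=> [K [_ [_ [_ [_ [_ [_ [Hd [Hf [Ht _]]]]]]]]]].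
  by case: Ht => ->.
case: ifP => _.
  by move=> [_ [//]].
move=> [S [_ _ _ [_ [_ [_ Hd]]] [Hf [Ht _]]]].
by case: Ht => ->.
Qed.

Lemma step_tau_some (a : R) k J rv rt t xh (s mid : slotsT) tau' xh' :
  nonsource_step a k J rv rt (Some t) xh s mid tau' xh' -> exists t', tau' = Some t'.
Proof.
move=> [K [_ [_ [_ [_ [_ [_ [_ [_ [Ht _]]]]]]]]]]; by rewrite Ht; eexists.
Qed.

Lemma step_mono (a : R) k J rv rt t xh (prev mid : slotsT) tau' xh' :
  full prev -> distinct_labels prev ->
  nonsource_step a k J rv rt (Some t) xh (incr prev) mid tau' xh' ->
  forall p, exists e e', [/\ prev p = Some e, mid p = Some e' & (idx e' <= idx e + 1)%N].
Proof.
move=> Hfull Hdist Hstep.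
case: Hstep => K [HKsub [HKcard [Hrank [Hkeep [Hmid [Hnew [Hd [Hfm _]]]]]]]].
set s := incr prev.
set fresh := fun l => Entry l (rv l) (rt l) k.
set s' := refresh J rt fresh s.
have Hs'1 : forall q e3, s' q = Some e3 -> exists e0, prev q = Some e0 /\ lab e3 = lab e0.
  move=> q e3; rewrite /s' /refresh /s /incr.
  case Hq: (prev q) => [e0|] //=.
  case: ifP => _ [<-]; by exists e0.
have Hs'2 : forall q e0, prev q = Some e0 -> exists e3, [/\ s' q = Some e3, lab e3 = lab e0
    & (idx e3 <= idx e0 + 1)%N].
  move=> q e0 Hq; rewrite /s' /refresh /s /incr Hq /=.
  case: ifP => [/andP [_ Hlt]|_].
    eexists; split; first reflexivity; first by [].
    by rewrite /fresh /= addn1 ltnW.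
  by eexists; split; first reflexivity; rewrite //= addn1.
have Hds' : distinct_labels s'.
  move=> q1 q2 e1 e2 H1 H2 Hl.
  have [f1 [P1 L1]] := Hs'1 _ _ H1; have [f2 [P2 L2]] := Hs'1 _ _ H2.
  by apply: (Hdist _ _ _ _ P1 P2); rewrite -L1 -L2.
have HMs : forall l, (l \in Mset s) = [exists q, slot_has s' q l].
  move=> l; rewrite /Mset inE; apply/existsP/existsP => [[q Hq]|[q Hq]]; exists q.
    move: Hq; rewrite /slot_has /s /incr.
    case Hp: (prev q) => [e0|] //= /eqP <-.
    by have [e3 [-> -> _]] := Hs'2 _ _ Hp.
  move: Hq; rewrite /slot_has /s /incr.
  case Hp: (s' q) => [e3|] //= /eqP <-.
  by have [e0 [-> ->]] := Hs'1 _ _ Hp.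
move=> p.
case Hp: (prev p) => [e|]; last by have := Hfull p; rewrite /full /s.
have [e2 [Hs'p Hl2 Hi2]] := Hs'2 _ _ Hp.
case Hmp: (mid p) => [e'|]; last by have := Hfm p.
exists e, e'; split => //.
have lMs : lab e \in Mset s.
  by rewrite HMs; apply/existsP; exists p; rewrite /slot_has Hs'p Hl2.
case: (Hmid _ _ Hmp) => [[Hse _]|[HK He']].
  by have [<-] : Some e2 = Some e' := etrans (esym Hs'p) Hse.
move: HK; rewrite inE => /andP [nMs lK].
have nK : lab e \notin K.
  apply/negP => lK'.
  have := Hkeep _ _ Hs'p; rewrite Hl2 => /(_ lK'); rewrite Hmp => -[Ee].
  by move: nMs; rewrite Ee Hl2 lMs.
have lC : lab e \in (Mset s :|: (J :\: Mset s)) :\: K by rewrite in_setD nK in_setU lMs.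
have : (rank_idx s' rt (lab e') <= rank_idx s' rt (lab e))%N := Hrank (lab e') (lab e) lK lC.
rewrite /rank_idx.
case: pickP => [q Hq|_].
  by exfalso; move: nMs; rewrite HMs; case/negP; apply/existsP; exists q.
case: pickP => [q Hq|Hn]; last by move: (Hn p); rewrite /slot_has Hs'p Hl2 eqxx.
move: Hq; rewrite /slot_has; case Hq: (s' q) => [e3|] //= /eqP Hl3.
have Eq : q = p by apply: (Hds' _ _ _ _ Hq Hs'p); rewrite Hl3 Hl2.
subst q; rewrite /slot_idx Hq.
rewrite Hs'p in Hq; case: Hq => <-.
rewrite He' /fresh /= => H; exact: leq_trans H Hi2.
Qed.

End H.

Theorem lemma5 (R : realFieldType) (N f : nat) (A : {set 'I_N})
    (a : R) (c gain : 'I_N -> R) (E : nat -> rel 'I_N)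
    (x : nat -> R) (msg : nat -> 'I_N -> 'I_N -> msg_t R)
    (tau : nat -> 'I_N -> option nat) (xh : nat -> 'I_N -> R)
    (sl mid : nat -> 'I_N -> slots N (2 * f).+1 R) :
  execution A a c gain E x msg tau xh sl mid ->
  forall (i : 'I_N) (k : nat), i \notin A -> c i = 0%R -> (0 < k)%N ->
  tau k i <> None ->
  (forall p : 'I_(2 * f).+1, exists e e' : entry N R,
      [/\ mid k i p = Some e, mid k.+1 i p = Some e' & (idx e' <= idx e + 1)%N]) /\
  (exists t t' : nat, [/\ tau k i = Some t, tau k.+1 i = Some t' & (t' <= t + 1)%N]).
Proof.
move=> [_ _ _ _ Hns] i k iA ci k0 Ht.
have [Ht0 _ Hst] := Hns i iA ci.
case: k k0 Ht => [//|k] _ Ht.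
case Htk: (tau k.+1 i) => [t|]; last by [].
have [Hs0 _] := Hst k.
rewrite Htk in Hs0.
have [Hf0 Hd0 Et] := step_some Hs0.
have [Hs1 Hsl1] := Hst k.+1.
rewrite Htk (Hst k).2 in Hs1.
have Hmono := step_mono Hf0 Hd0 Hs1.
have [t' Ht'] := step_tau_some Hs1.
rewrite Ht' in Hs1.
have [Hf1 Hd1 Et'] := step_some Hs1.
have [Hs2 _] := Hst k.+2.
rewrite Ht' Hsl1 in Hs2.
split; first exact: (step_mono Hf1 Hd1 Hs2).
exists t, t'; split => //.
rewrite Et Et' leq_add2r.
apply/bigmax_leqP => p _.
have [e [e' [He He' Hle]]] := Hmono p.
rewrite /slot_idx He'.
apply: leq_trans Hle _; rewrite leq_add2r.
by have := @leq_bigmax _ (fun p => slot_idx (mid k i) p) p; rewrite /slot_idx He.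
Qed.
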